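(* Let $\mathcal{D}=(\mathcal{P},\mathcal{L})$ be a $(G,2)$-point-transitive linear space with $|\mathcal{P}|\ge4$, where $G\le\mathrm{Aut}(\mathcal{D})$. Let $(\sigma,L)$ be an antiflag of $\mathcal{D}$ such that $\Omega=(\sigma,\mathcal{P}\setminus L)^G$ is a feasible $G$-orbit on the set of flags of the complement $\overline{\mathcal{D}}$. Then either $G_L$ is 2-transitive on $\mathcal{P}\setminus L$, or $G_L\le G_\sigma$ and $|L|(|L|-1)$ divides $|\mathcal{P}|-1$. Moreover, if $L=\{\alpha,\beta\}$, then either $|\mathcal{P}|=4$ and $G=A_4$, or $G_{\alpha,\beta}$ is transitive on $\mathcal{P}\setminus\{\alpha,\beta\}$, or $|\mathcal{P}|$ is odd and $G_{\alpha,\beta}\le G_\sigma$ is $\tfrac12$-transitive on $\mathcal{P}\setminus\{\alpha,\beta,\sigma\}$.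
   Context: All groups are finite. A linear space is an incidence structure of points and lines (lines identified with point sets) in which each line has at least two points and any two points lie on exactly one line; $(G,2)$-point-transitive means $G$ acts as automorphisms, 2-transitively on points. An antiflag is a pair $(\sigma,L)$ with $L$ a line and $\sigma\notin L$. The complement $\overline{\mathcal{D}}$ has point set $\mathcal{P}$ and blocks $\mathcal{P}\setminus L$, $L\in\mathcal{L}$; its flags are pairs (point, block containing it). For a $G$-orbit $\Omega$ on flags and a point $\sigma$, $\Omega(\sigma)$ is the set of flags of $\Omega$ with point-entry $\sigma$; $\Omega$ is feasible if $|\Omega(\sigma)|\ge2$ and, for a flag $(\sigma,M)\in\Omega$, the setwise stabilizer $G_{\sigma,M}$ of $M$ in $G_\sigma$ is transitive on $M\setminus\{\sigma\}$. $G_L$ is the setwise stabilizer of $L$, $G_{\alpha,\beta}=G_\alpha\cap G_\beta$. A group is $\tfrac12$-transitive on a set if all its orbits on that set have the same length. *)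

(* Defs.v *)
From mathcomp Require Import all_boot all_fingroup all_solvable.
Open Scope group_scope. Open Scope nat_scope.
Set Implicit Arguments. Unset Strict Implicit. Unset Printing Implicit Defensive.

(* Points: a finite type T (the point set P is [set: T]);
   lines: a set of subsets of T;  G : a group of permutations of T,
   acting by the natural permutation action 'P. *)

Definition linear_space (T : finType) (lines : {set {set T}}) : Prop :=
  (forall L, L \in lines -> 1 < #|L|) /\
  (forall x y : T, x != y -> #|[set L in lines | (x \in L) && (y \in L)]| = 1).

Definition automorphisms (T : finType) (lines : {set {set T}})
    (G : {set {perm T}}) : Prop :=
  [acts G, on lines | 'P^*].

(* The G-orbit of the flag (s, M) of the complement design (a flag is a
   pair (point, block)). *)
Definition flag_orbit (T : finType) (G : {set {perm T}}) (s : T) (M : {set T})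
  : {set T * {set T}} :=
  [set (aperm s g, setact 'P M g) | g in G].

Definition flags_at (T : finType) (Om : {set T * {set T}}) (t : T)
  : {set T * {set T}} :=
  [set f in Om | f.1 == t].

Definition feasible (T : finType) (G : {set {perm T}}) (Om : {set T * {set T}})
  : Prop :=
  (forall t : T, 2 <= #|flags_at Om t|) /\
  (forall f, f \in Om ->
     [transitive 'C_G[f.1 | 'P] :&: 'N(f.2 | 'P), on f.2 :\ f.1 | 'P]).

Definition half_transitive (T : finType) (H : {set {perm T}}) (S : {set T})
  : Prop :=
  [acts H, on S | 'P] /\
  (forall x y, x \in S -> y \in S -> #|orbit 'P H x| = #|orbit 'P H y|).

(* Main.v *)
Require Import Defs.
From mathcomp Require Import all_boot all_fingroup all_solvable.
From mathcomp Require Import ring.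
Open Scope group_scope. Open Scope nat_scope.
Set Implicit Arguments. Unset Strict Implicit. Unset Printing Implicit Defensive.

Lemma trans2_pair (T : finType) (A : {group {perm T}}) (S : {set T}) x x' y y' :
  [transitive^2 A, on S | 'P] -> x \in S -> x' \in S -> y \in S -> y' \in S ->
  x != x' -> y != y' ->
  exists2 g, g \in A & g x = y /\ g x' = y'.
Proof.
move=> tr Sx Sx' Sy Sy' nx ny.
have d1 : [tuple x; x'] \in 2.-dtuple(S).
  by rewrite inE /= !inE andbT nx /=; apply/subsetP => z; rewrite !inE => /orP[] /eqP->.
have d2 : [tuple y; y'] \in 2.-dtuple(S).
  by rewrite inE /= !inE andbT ny /=; apply/subsetP => z; rewrite !inE => /orP[] /eqP->.
have [g Ag E] := atransP2 tr d1 d2.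
exists g => //; move: E => /(congr1 val) /= [-> ->]; done.
Qed.

Lemma trans_ntrans1 (T : finType) (A : {group {perm T}}) (S : {set T}) :
  [transitive A, on S | 'P] -> [transitive^1 A, on S | 'P].
Proof.
have trdom1 x: ([tuple x] \in 1.-dtuple(S)) = (x \in S).
  by rewrite dtuple_on_add !inE memtE subset_all andbT.
case/imsetP=> x Sx defS; apply/imsetP; exists [tuple x]; first by rewrite trdom1.
apply/setP=> t; case/tupleP: t => y t0; rewrite (tuple0 t0) trdom1 defS.
by apply/imsetP/imsetP=> [[a ? ->]|[a ? [->]]]; exists a => //; apply: val_inj.
Qed.

Lemma line_uniq (T : finType) (lines : {set {set T}}) L1 L2 x y :
  linear_space lines -> L1 \in lines -> L2 \in lines -> x != y ->
  x \in L1 -> y \in L1 -> x \in L2 -> y \in L2 -> L1 = L2.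
Proof.
move=> [_ ls] l1 l2 nxy x1 y1 x2 y2.
have /card_le1_eqP H : #|[set L in lines | (x \in L) && (y \in L)]| <= 1 by rewrite ls.
by apply: H; rewrite inE ?l1 ?l2 ?x1 ?y1 ?x2 ?y2.
Qed.

Lemma line_stab (T : finType) (lines : {set {set T}}) (G : {group {perm T}}) L g x y :
  linear_space lines -> automorphisms lines G -> L \in lines -> g \in G ->
  x != y -> x \in L -> y \in L -> g x \in L -> g y \in L -> g \in 'N(L | 'P).
Proof.
move=> ls au lL gG nxy xL yL gxL gyL.
have lg : setact 'P L g \in lines by rewrite (actsP au).
have e : setact 'P L g = L.
  apply: (line_uniq ls lg lL (x := g x) (y := g y)) => //.
  - by rewrite (inj_eq perm_inj).
  - exact: (mem_setact 'P g xL).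
  - exact: (mem_setact 'P g yL).
apply/astabsP => z; rewrite -{1}e /=.
apply/imsetP/idP => [[w wL /perm_inj ->]//|zL]; by exists z.
Qed.

Lemma feas_trans (T : finType) (G : {group {perm T}}) s (L : {set T}) :
  feasible G (flag_orbit G s (~: L)) ->
  [transitive 'C_G[s | 'P] :&: 'N(L | 'P), on ~: L :\ s | 'P].
Proof.
case=> _ /(_ (s, ~: L)); rewrite astabsC; apply.
apply/imsetP; exists 1%g; first exact: group1.
by rewrite /= act1 (act1 'P^*).
Qed.

Lemma stabN (T : finType) (G : {group {perm T}}) s (L : {set T}) :
  'C_('N_G(L | 'P))[s | 'P] = 'C_G[s | 'P] :&: 'N(L | 'P).
Proof. by rewrite /= setIAC. Qed.

Lemma part1 (T : finType) (lines : {set {set T}}) (G : {group {perm T}}) s (L : {set T}) :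
  linear_space lines -> automorphisms lines G ->
  [transitive^2 G, on [set: T] | 'P] ->
  L \in lines -> s \notin L ->
  [transitive 'C_G[s | 'P] :&: 'N(L | 'P), on ~: L :\ s | 'P] ->
  ([transitive^2 'N_G(L | 'P), on ~: L | 'P]
   \/ ('N_G(L | 'P) \subset 'C_G[s | 'P] /\ (#|L| * (#|L| - 1) %| #|T| - 1)%N)).
Proof.
move=> ls au tr2 lL sL F.
have trG : [transitive G, on [set: T] | 'P] by apply: (ntransitive1 (m := 2)).
case: (boolP ('N_G(L | 'P) \subset 'C_G[s | 'P])) => [sub | nsub]; last first.
  left; have [g gN gs] := subsetPn nsub.
  have [gG gNL] := setIP gN.
  have gs' : g s != s.
    by apply: contra gs => /eqP e; rewrite inE gG; apply/astab1P.
  have trN : [transitive 'N_G(L | 'P), on ~: L | 'P].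
    apply/imsetP; exists s; first by rewrite inE.
    apply/setP => y; apply/idP/idP.
      move=> yL; case: (eqVneq y s) => [->|ys]; first exact: orbit_refl.
      have gsS : g s \in ~: L :\ s.
        by rewrite !inE gs' /=; rewrite -(astabs_act s gNL) /= in sL.
      have yS : y \in ~: L :\ s by rewrite in_setD1 ys yL.
      have [k kK ->] := atransP2 F gsS yS.
      have [/setIP [kG _] kN] := setIP kK.
      apply/imsetP; exists (g * k)%g; last by rewrite actM.
      by rewrite groupM // inE kG.
    case/imsetP => h /setIP [hG hN] ->.
    by rewrite inE (astabs_act s hN).
  apply: (stab_ntransitiveI (x := s)) => //; first by rewrite inE.
  by rewrite stabN; apply: trans_ntrans1.
right; split => //.
have [a [b [aL bL nab]]] : exists a b, [/\ a \in L, b \in L & a != b].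
  by apply/card_gt1P; case: ls => H _; apply: H.
have oG x : #|G| = #|T| * #|'C_G[x | 'P]|.
  by rewrite -(card_orbit_stab 'P G x) (atransP trG) ?inE // cardsT.
have tr1 : [transitive 'C_G[a | 'P], on [set: T] :\ a | 'P].
  apply: (ntransitive1 (m := 1)) => //.
  by apply: stab_ntransitive => //; rewrite inE.
have oGa : #|'C_G[a | 'P]| = (#|T| - 1) * #|'C_('C_G[a | 'P])[b | 'P]|.
  rewrite -(card_orbit_stab 'P _ b) (atransP tr1); last by rewrite !inE eq_sym nab.
  by rewrite -cardsT (cardsD1 a [set: T]) inE add1n subn1.
set NL := 'N_G(L | 'P).
have eo : orbit 'P NL a = L.
  apply/setP => y; apply/idP/idP.
    by case/imsetP => h /setIP [_ hN] ->; rewrite (astabs_act a hN).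
  move=> yL; case: (eqVneq y a) => [->|ya]; first exact: orbit_refl.
  have [g gG [ga gb]] := trans2_pair tr2 (in_setT a) (in_setT b) (in_setT y) (in_setT a) nab ya.
  apply/imsetP; exists g => //.
  by rewrite inE gG (line_stab ls au lL gG nab aL bL) /= ?ga ?gb.
have oNL : #|NL| = #|L| * #|'C_NL[a | 'P]|.
  by rewrite -(card_orbit_stab 'P _ a) eo.
have eo2 : orbit 'P 'C_NL[a | 'P] b = L :\ a.
  apply/setP => y; apply/idP/idP.
    case/imsetP => h /setIP [/setIP [_ hN] /astab1P ha] ->.
    rewrite !inE -{1}ha /= (inj_eq perm_inj) eq_sym nab /=.
    by have := astabs_act b hN; rewrite /= bL.
  rewrite !inE => /andP [ya yL].
  have ay : a != y by rewrite eq_sym.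
  have [g gG [ga gb]] := trans2_pair tr2 (in_setT a) (in_setT b) (in_setT a) (in_setT y) nab ay.
  apply/imsetP; exists g => //.
  apply/setIP; split; last by apply/astab1P.
  by apply/setIP; split => //; apply: (line_stab ls au lL gG nab aL bL); rewrite /= ?ga ?gb.
have oNLa : #|'C_NL[a | 'P]| = (#|L| - 1) * #|'C_('C_NL[a | 'P])[b | 'P]|.
  by rewrite -(card_orbit_stab 'P _ b) eo2 (cardsD1 a L) aL add1n subn1.
have eab : 'C_('C_NL[a | 'P])[b | 'P] = 'C_('C_G[a | 'P])[b | 'P].
  apply/setP => h; apply/idP/idP.
    move=> /setIP [/setIP [/setIP [hG _] ha] hb].
    by apply/setIP; split => //; apply/setIP; split.
  move=> /setIP [/setIP [hG ha] hb].
  apply/setIP; split => //; apply/setIP; split => //; apply/setIP; split => //.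
  have ha' : h a = a by move/astab1P: ha. have hb' : h b = b by move/astab1P: hb.
  by apply: (line_stab ls au lL hG nab aL bL); rewrite ?ha' ?hb'.
have oGs := Lagrange sub.
have c0 : 0 < #|'C_('C_G[a | 'P])[b | 'P]| by apply: cardG_gt0.
have v0 : 0 < #|T| by apply/card_gt0P; exists a.
have E : #|T| * ((#|T| - 1) * #|'C_('C_G[a | 'P])[b | 'P]|) =
         #|T| * ((#|'C_G[s | 'P] : NL| * (#|L| * (#|L| - 1))) * #|'C_('C_G[a | 'P])[b | 'P]|).
  rewrite -oGa -oG (oG s) -oGs oNL oNLa eab.
  ring.
move/eqP: E; rewrite eqn_pmul2l // eqn_pmul2r // => /eqP ->.
exact: dvdn_mull.
Qed.

Lemma fixL (T : finType) (G : {group {perm T}}) (a b : T) h z :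
  h \in 'C_G[a | 'P] :&: 'C_G[b | 'P] -> z \in [set a; b] -> h z = z.
Proof.
case/setIP => /setIP [_ /astab1P ha] /setIP [_ /astab1P hb].
by rewrite !inE => /orP [] /eqP ->.
Qed.

Lemma conjH (T : finType) (G : {group {perm T}}) (a b : T) h g :
  h \in 'C_G[a | 'P] :&: 'C_G[b | 'P] -> g \in G -> g \in 'N([set a; b] | 'P) ->
  (h ^ g)%g \in 'C_G[a | 'P] :&: 'C_G[b | 'P].
Proof.
move=> hH gG gN.
have hG : h \in G by case/setIP: hH => /setIP [].
have giN : g^-1 \in 'N([set a; b] | 'P) by rewrite groupV.
have key z : z \in [set a; b] -> aperm z (h ^ g)%g = z.
  move=> zL; rewrite conjgE !actM /=.
  have zi : aperm z g^-1 \in [set a; b] by rewrite (astabs_act z giN).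
  rewrite [aperm (aperm z g^-1) h](fixL hH zi).
  by rewrite -actM mulVg act1.
have aL : a \in [set a; b] by rewrite !inE eqxx.
have bL : b \in [set a; b] by rewrite !inE eqxx orbT.
have hgG : (h ^ g)%g \in G by rewrite groupJ.
apply/setIP; split; apply/setIP; split => //; apply/astab1P.
  exact: (key a aL).
exact: (key b bL).
Qed.

Lemma orbit_mapH (T : finType) (G : {group {perm T}}) (a b : T) g x y :
  g \in G -> g \in 'N([set a; b] | 'P) ->
  y \in orbit 'P ('C_G[a | 'P] :&: 'C_G[b | 'P]) x ->
  g y \in orbit 'P ('C_G[a | 'P] :&: 'C_G[b | 'P]) (g x).
Proof.
move=> gG gN /imsetP [h hH ->].
apply/imsetP; exists (h ^ g)%g; first exact: conjH.
rewrite conjgE !actM /=.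
have -> : aperm (g x) g^-1 = x by rewrite -actM mulgV act1.
by [].
Qed.

Lemma card_orbitH (T : finType) (G : {group {perm T}}) (a b : T) g x :
  g \in G -> g \in 'N([set a; b] | 'P) ->
  #|orbit 'P ('C_G[a | 'P] :&: 'C_G[b | 'P]) x| =
  #|orbit 'P ('C_G[a | 'P] :&: 'C_G[b | 'P]) (g x)|.
Proof.
have le g' x' : g' \in G -> g' \in 'N([set a; b] | 'P) ->
  #|orbit 'P ('C_G[a | 'P] :&: 'C_G[b | 'P]) x'| <=
  #|orbit 'P ('C_G[a | 'P] :&: 'C_G[b | 'P]) (g' x')|.
  move=> gG gN; rewrite -(card_imset _ (@perm_inj _ g')).
  apply: subset_leq_card; apply/subsetP => z /imsetP [y yO ->].
  exact: orbit_mapH.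
move=> gG gN; apply/eqP; rewrite eqn_leq le //=.
have := le g^-1 (g x); rewrite permK; apply; by rewrite groupV.
Qed.

Lemma d12 d : d %| 12 -> 9 <= d -> d = 12.
Proof.
move=> dv ge; have le := dvdn_leq (isT : 0 < 12) dv.
by move: dv ge le; do 13?[case: d => [|d] //].
Qed.

Lemma odd3 (T : finType) (g : {perm T}) : (g ^+ 3)%g = 1%g -> g \in Alt T.
Proof.
move=> e; rewrite Alt_even; have := congr1 (@odd_perm _) e.
rewrite !expgS expg0 mulg1 !odd_permM odd_perm1.
by case: (odd_perm g).
Qed.

Lemma alt4 (T : finType) (G : {group {perm T}}) (a b : T) :
  #|T| = 4 -> [transitive^2 G, on [set: T] | 'P] -> a != b ->
  (forall h, h \in 'C_G[a | 'P] :&: 'C_G[b | 'P] -> h = 1%g) ->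
  G :=: Alt T.
Proof.
move=> v4 tr2 nab H1.
have trG : [transitive G, on [set: T] | 'P] by apply: (ntransitive1 (m := 2)).
have Gxy x y g : x != y -> g \in G -> g x = x -> g y = y -> g = 1%g.
  move=> nxy gG gx gy.
  have [k kG [ka kb]] := trans2_pair tr2 (in_setT a) (in_setT b) (in_setT x) (in_setT y) nab nxy.
  have kk z : aperm z (g ^ k^-1)%g = k^-1 (g (k z)).
    by rewrite conjgE invgK !actM.
  apply/eqP; rewrite -(conjg_eq1 g k^-1); apply/eqP; apply: H1.
  have gkG : (g ^ k^-1)%g \in G by rewrite groupJ ?groupV.
  apply/setIP; split; apply/setIP; split => //; apply/astab1P; apply: (etrans (kk _)).
    by rewrite ka gx -ka permK.
  by rewrite kb gy -kb permK.
have oGx x : #|'C_G[x | 'P]| = 3.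
  have [y nxy] : exists y, x != y.
    apply/existsP; apply: contraT => /existsPn nx.
    have : #|T| <= 1 by apply/card_le1_eqP => u v _ _; move: (nx u) (nx v); rewrite !negbK => /eqP <- /eqP <-.
    by rewrite v4.
  have tr1 : [transitive 'C_G[x | 'P], on [set: T] :\ x | 'P].
    apply: (ntransitive1 (m := 1)) => //.
    by apply: stab_ntransitive => //; rewrite inE.
  rewrite -(card_orbit_stab 'P _ y) (atransP tr1); last by rewrite !inE eq_sym nxy.
  have -> : #|'C_('C_G[x | 'P])[y | 'P]| = 1.
    apply/eqP; rewrite -trivg_card1; apply/eqP/trivgP/subsetP => g.
    move=> /setIP [/setIP [gG /astab1P gx] /astab1P gy].
    by rewrite (Gxy x y g nxy gG gx gy) inE.
  by move: (cardsD1 x [set: T]); rewrite inE cardsT v4 muln1 add1n => -[<-].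
have oG : #|G| = 12.
  by rewrite -(card_orbit_stab 'P G a) (atransP trG) ?inE // cardsT v4 oGx.
have FC := Frobenius_Cauchy (atrans_acts trG).
have : #|[set orbit 'P G x | x in [set: T]]| == 1 by move: trG; rewrite atrans_acts_card => /andP [].
move/eqP => o1; rewrite o1 mul1n oG in FC.
have bnd g : g \in G -> #|'Fix_([set: T] | 'P)[g]| <= (g \in Alt T) + 3 * (g == 1%g).
  move=> gG; case: (eqVneq g 1%g) => [->|g1].
    rewrite group1 /=.
    have -> : 'Fix_([set: T] | 'P)[1%g] = [set: T].
      by apply/setP => z; rewrite in_setI in_setT andTb; apply/afix1P; rewrite act1.
    by rewrite cardsT v4.
  rewrite addn0.
  have le1 : #|'Fix_([set: T] | 'P)[g]| <= 1.
    apply/card_le1_eqP => x y /setIP [_ /afix1P gx] /setIP [_ /afix1P gy].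
    apply/eqP; apply: contraT; rewrite eq_sym => nxy.
    by move: g1; rewrite (Gxy x y g nxy gG gx gy) eqxx.
  case: (boolP (0 < #|'Fix_([set: T] | 'P)[g]|)) => [/card_gt0P [x /setIP [_ /afix1P gx]] | ].
    have gC : g \in 'C_G[x | 'P] by apply/setIP; split => //; apply/astab1P.
    have := expg_cardG gC; rewrite oGx => /odd3 ->.
    exact: le1.
  by rewrite -eqn0Ngt => /eqP ->.
have sum_le : 12 <= #|G :&: Alt T| + 3.
  rewrite -FC.
  apply: leq_trans; first exact: (leq_sum _ bnd).
  rewrite big_split /= -big_distrr /=.
  have S3 : \sum_(i in G) (i == 1%g) = 1.
    by rewrite (bigD1 1%g) ?group1 //= big1 ?eqxx // => g /andP [_ /negPf ->].
  have SA : \sum_(i in G) (i \in Alt T) = #|G :&: Alt T|.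
    rewrite -sum1_card [RHS](eq_bigl (fun i => (i \in G) && (i \in Alt T))); last first.
      by move=> i; rewrite in_setI.
    rewrite big_mkcondr /=; apply: eq_bigr => i _.
    by case: (i \in Alt T).
  by rewrite S3 SA muln1.
have GA : #|G :&: Alt T| = 12.
  apply: d12; last by rewrite -(leq_add2r 3).
  by rewrite -oG cardSg // subsetIl.
have sGA : G \subset Alt T.
  have e : G :&: Alt T = G by apply/eqP; rewrite eqEcard subsetIl GA oG.
  by rewrite -e subsetIr.
apply/eqP; rewrite eqEcard sGA oG.
have := card_Alt (T := T); rewrite v4 => /(_ isT).
by move=> e; rewrite -(leq_pmul2l (isT : 0 < 2)) e.
Qed.

Lemma HN (T : finType) (G : {group {perm T}}) (a b : T) h :
  h \in 'C_G[a | 'P] :&: 'C_G[b | 'P] -> h \in 'N([set a; b] | 'P).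
Proof.
move=> hH.
have ha : h a = a by apply: (fixL hH); rewrite !inE eqxx.
have hb : h b = b by apply: (fixL hH); rewrite !inE eqxx orbT.
apply/astabsP => z /=; rewrite !inE.
rewrite -{1}ha -{1}hb !(inj_eq perm_inj).
by [].
Qed.

Lemma fixa (T : finType) (G : {group {perm T}}) (a b : T) g :
  a != b -> g \in G -> g \in 'N([set a; b] | 'P) -> g a = a ->
  g \in 'C_G[a | 'P] :&: 'C_G[b | 'P].
Proof.
move=> nab gG gN ga.
have gb : g b = b.
  have := astabs_act b gN; rewrite !inE eqxx orbT /= => /orP [] /eqP //.
  move=> e; have e2 : g b = g a by rewrite ga; exact: e.
  by move: nab; rewrite (perm_inj e2) eqxx.
by apply/setIP; split; apply/setIP; split => //; apply/astab1P.
Qed.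

Lemma part2 (T : finType) (lines : {set {set T}}) (G : {group {perm T}}) s (a b : T) :
  linear_space lines -> automorphisms lines G ->
  [transitive^2 G, on [set: T] | 'P] -> 4 <= #|T| ->
  [set a; b] \in lines -> s \notin [set a; b] ->
  [transitive 'C_G[s | 'P] :&: 'N([set a; b] | 'P), on ~: [set a; b] :\ s | 'P] ->
  ([transitive^2 'N_G([set a; b] | 'P), on ~: [set a; b] | 'P]
   \/ ('N_G([set a; b] | 'P) \subset 'C_G[s | 'P] /\ (#|[set a; b]| * (#|[set a; b]| - 1) %| #|T| - 1)%N)) ->
     (#|T| = 4 /\ G :=: Alt T)
     \/ [transitive 'C_G[a | 'P] :&: 'C_G[b | 'P], on ~: [set a; b] | 'P]
     \/ (odd #|T| /\ 'C_G[a | 'P] :&: 'C_G[b | 'P] \subset 'C_G[s | 'P]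
         /\ half_transitive ('C_G[a | 'P] :&: 'C_G[b | 'P]) (~: [set a; b; s])).
Proof.
move=> ls au tr2 v4 lL sL F.
set L := [set a; b].
set H := 'C_G[a | 'P] :&: 'C_G[b | 'P].
have nab : a != b.
  apply: contraT; rewrite negbK => /eqP e.
  by have := ls.1 _ lL; rewrite /L e setUid cards1.
have aL : a \in L by rewrite !inE eqxx.
have bL : b \in L by rewrite !inE eqxx orbT.
have HG h : h \in H -> h \in G by case/setIP => /setIP [].
case => [tr2N | [sub dv]]; last first.
  right; right.
  have sHN : H \subset 'N_G(L | 'P).
    apply/subsetP => h hH; apply/setIP; split; [exact: HG | exact: (HN hH)].
  have sHs := subset_trans sHN sub.
  split; [|split => //].
    move: dv; rewrite cards2 nab /=.
    case: #|T| v4 => // n _; rewrite subSS subn0 /= dvdn2.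
    by rewrite subSS subn0.
  have eS : ~: [set a; b; s] = ~: L :\ s.
    by apply/setP => z; rewrite !inE !negb_or; case: (z == s); rewrite ?andbT ?andbF.
  split.
    apply/actsP => h hH z.
    have ha : h a = a by apply: (fixL hH).
    have hb : h b = b by apply: (fixL hH).
    have hs : h s = s by move: (subsetP sHs h hH) => /setIP [_ /astab1P].
    rewrite !inE /= -{1}ha -{1}hb -{1}hs !(inj_eq perm_inj).
    by [].
  rewrite eS => x y xS yS.
  have [k kK ->] := atransP2 F xS yS.
  have [/setIP [kG _] kN] := setIP kK.
  exact: card_orbitH.
have ct : #|~: L| = #|T| - 2.
  by rewrite -(cardsC L) /L cards2 nab addKn.
case: (boolP [exists x in ~: L, exists y in ~: L, (y != x) && (y \in orbit 'P H x)]).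
  move=> /existsP [x /andP [xL /existsP [y /andP [yL /andP [yx yO]]]]].
  right; left.
  apply/imsetP; exists x => //.
  apply/setP => z; apply/idP/idP; last first.
    case/imsetP => h hH ->; rewrite in_setC /L (astabs_act x (HN hH)) -in_setC; exact: xL.
  move=> zL; case: (eqVneq z x) => [->|zx]; first exact: orbit_refl.
  case: (eqVneq z y) => [->//|zy].
  have xy : x != y by rewrite eq_sym.
  have xz : x != z by rewrite eq_sym.
  have [g /setIP [gG gN] [gx gy]] := trans2_pair tr2N xL yL xL zL xy xz.
  have := orbit_mapH gG gN yO; rewrite gx gy; exact.
move=> nex; left.
have H1 h : h \in H -> h = 1%g.
  move=> hH; apply/permP => z; rewrite perm1.
  case: (boolP (z \in L)) => zL; first exact: (fixL hH).
  apply/eqP; apply: contraNT nex => hz.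
  apply/existsP; exists z; rewrite inE zL /=.
  apply/existsP; exists (h z).
  have hzL : h z \in ~: L by rewrite inE (astabs_act z (HN hH)).
  rewrite hzL hz /=.
  exact: (mem_orbit 'P z hH).
have le2 : #|~: L| <= 2.
  have [x [y [xL yL xy]]] : exists x y, [/\ x \in ~: L, y \in ~: L & x != y].
    by apply/card_gt1P; rewrite ct; case: #|T| v4 => [|[|[|[|n]]]].
  have -> : ~: L = [set x; y] :&: ~: L.
    apply/setP => z; rewrite in_setI; case: (boolP (z \in ~: L)) => zL; rewrite ?andbF ?andbT //.
    apply/esym; rewrite !inE; apply: contraT; rewrite negb_or => /andP [zx zy].
    have yx : y != x by rewrite eq_sym.
    have xz : x != z by rewrite eq_sym.
    have [g1 /setIP [g1G g1N] [g1x g1y]] := trans2_pair tr2N xL yL yL xL xy yx.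
    have [g2 /setIP [g2G g2N] [g2x g2y]] := trans2_pair tr2N xL yL xL zL xy xz.
    have swap g : g \in G -> g \in 'N(L | 'P) -> g != 1%g -> g a = b /\ g b = a.
      move=> gG gN gn1.
      have gaL := astabs_act a gN; rewrite aL /= !inE in gaL.
      have gbL := astabs_act b gN; rewrite bL /= !inE in gbL.
      case/orP: gaL => /eqP ga.
        by move: gn1; rewrite (H1 _ (fixa nab gG gN ga)) eqxx.
      split => //; case/orP: gbL => /eqP gb //.
      by move: nab; rewrite (@perm_inj _ g a b (etrans ga (esym gb))) eqxx.
    have n1 : g1 != 1%g by apply/eqP => e; move: yx; rewrite -g1x e perm1 eqxx.
    have n2 : g2 != 1%g by apply/eqP => e; move: zy; rewrite -g2y e perm1 eqxx.
    have [g1a g1b] := swap g1 g1G g1N n1.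
    have [g2a g2b] := swap g2 g2G g2N n2.
    have kG : (g1 * g2^-1)%g \in G by rewrite groupM ?groupV.
    have kN : (g1 * g2^-1)%g \in 'N(L | 'P) by rewrite groupM ?groupV.
    have ka : (g1 * g2^-1)%g a = a.
      by rewrite permM g1a -g2a permK.
    have e0 := H1 _ (fixa nab kG kN ka).
    have e := congr1 (fun p : {perm T} => p x) e0; simpl in e.
    rewrite permM g1x perm1 in e.
    have eyx : y = x by rewrite -[RHS]g2x -e permKV.
    by move: yx; rewrite eyx eqxx.
  by rewrite (leq_trans (subset_leq_card (subsetIl _ _))) // cards2 xy.
have v4' : #|T| = 4.
  by apply/eqP; rewrite eqn_leq v4 andbT -(leq_add2r 0) -(subnK v4); move: le2; rewrite ct; case: #|T| v4 => [|[|[|[|[|n]]]]].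
split => //.
exact: (alt4 v4' tr2 nab H1).
Qed.

Theorem lemma3p2 (T : finType) (lines : {set {set T}}) (G : {group {perm T}})
    (s : T) (L : {set T}) :
  linear_space lines ->
  automorphisms lines G ->
  [transitive^2 G, on [set: T] | 'P] ->
  4 <= #|T| ->
  L \in lines -> s \notin L ->
  feasible G (flag_orbit G s (~: L)) ->
  ([transitive^2 'N_G(L | 'P), on ~: L | 'P]
   \/ ('N_G(L | 'P) \subset 'C_G[s | 'P] /\ (#|L| * (#|L| - 1) %| #|T| - 1)%N))
  /\
  (forall a b : T, L = [set a; b] ->
     (#|T| = 4 /\ G :=: Alt T)
     \/ [transitive 'C_G[a | 'P] :&: 'C_G[b | 'P], on ~: [set a; b] | 'P]
     \/ (odd #|T| /\ 'C_G[a | 'P] :&: 'C_G[b | 'P] \subset 'C_G[s | 'P]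
         /\ half_transitive ('C_G[a | 'P] :&: 'C_G[b | 'P]) (~: [set a; b; s]))).
Proof.
move=> ls au tr2 v4 lL sL feas.
have F := feas_trans feas.
have P1 := part1 ls au tr2 lL sL F.
split => // a b eL; subst L.
exact: (part2 ls au tr2 v4 lL sL F P1).
Qed.
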